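(* In the setting described in the context, let $F$ be strongly convex with respect to $\|\cdot\|_L$ with convexity parameter $\mu>0$, and choose accuracy $\epsilon>0$, confidence $0<\rho<1$, and $$k\geq\frac{n}{1-\gamma_\mu}\log\left(\frac{F(x_0)-F^*}{\rho\epsilon}\right),$$ where $\gamma_\mu=1-\frac\mu4$ if $\mu\leq2$ and $\gamma_\mu=\frac1\mu$ otherwise. If $x_k$ is the random point generated by UCDC$(x_0)$, then $\mathbf{P}(F(x_k)-F^*\leq\epsilon)\geq1-\rho$.
   Context: Let $U\in\mathbf{R}^{N\times N}$ be a column permutation of the $N\times N$ identity matrix, partitioned as $U=[U_1,\dots,U_n]$ with $U_i\in\mathbf{R}^{N\times N_i}$, $\sum_iN_i=N$. For $x\in\mathbf{R}^N$ write $x^{(i)}=U_i^Tx$. Each $\mathbf{R}^{N_i}$ carries the norm $\|t\|_{(i)}=\langle B_it,t\rangle^{1/2}$ and dual norm $\|t\|_{(i)}^*=\langle B_i^{-1}t,t\rangle^{1/2}$ with $B_i$ positive definite. Consider minimizing $F(x)=f(x)+\Psi(x)$ over $\mathbf{R}^N$, where $f$ is convex and differentiable with $\|\nabla_if(x+U_it)-\nabla_if(x)\|_{(i)}^*\leq L_i\|t\|_{(i)}$ for all $x,t,i$ (constants $L_i>0$, $\nabla_if(x)=U_i^T\nabla f(x)$), and $\Psi(x)=\sum_i\Psi_i(x^{(i)})$ with each $\Psi_i$ proper closed convex. The problem has a minimizer; $F^*$ is the optimal value. Let $\|x\|_L=(\sum_iL_i\|x^{(i)}\|_{(i)}^2)^{1/2}$.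 Strong convexity w.r.t. $\|\cdot\|_L$ with parameter $\mu$: $F(x)\geq F(y)+\langle F'(y),x-y\rangle+\frac\mu2\|x-y\|_L^2$ for all $x,y\in\mathrm{dom}\,F$ and all subgradients $F'(y)$. Algorithm UCDC$(x_0)$: for $k=0,1,2,\dots$, choose $i\in\{1,\dots,n\}$ uniformly at random (independently), compute $T^{(i)}(x_k)=\arg\min_{t\in\mathbf{R}^{N_i}}\{\langle\nabla_if(x_k),t\rangle+\frac{L_i}{2}\|t\|_{(i)}^2+\Psi_i(x_k^{(i)}+t)\}$ and set $x_{k+1}=x_k+U_iT^{(i)}(x_k)$. *)

(* Defs.v *)
From HB Require Import structures.
From mathcomp Require Import all_boot all_order all_algebra.
From mathcomp Require Import all_classical all_reals all_analysis.
Unset Printing Implicit Defensive.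
Import Order.TTheory GRing.Theory Num.Theory.
Import numFieldNormedType.Exports.
Local Open Scope ring_scope.

Section UCDC.
Context {R : realType}.
Context {n : nat}.
Context {Ns : 'I_n -> nat}.

Definition Ntot : nat := (\sum_(i < n) Ns i)%N.
Notation vec := 'cV[R]_Ntot.

Definition inner {m} (a b : 'cV[R]_m) : R := (a^T *m b) 0 0.

Definition posdef {m} (B : 'M[R]_m) : Prop :=
  B^T = B /\ forall t : 'cV[R]_m, t != 0 -> 0 < inner (B *m t) t.

Definition bnorm {m} (B : 'M[R]_m) (t : 'cV[R]_m) : R := Num.sqrt (inner (B *m t) t).
Definition bdnorm {m} (B : 'M[R]_m) (t : 'cV[R]_m) : R :=
  Num.sqrt (inner (invmx B *m t) t).

(* U_i : the i-th column block of U (an N x N_i matrix) *)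
Definition blkU (U : 'M[R]_Ntot) (i : 'I_n) : 'M[R]_(Ntot, Ns i) :=
  @submxrow R n Ns Ntot U i.

Definition blk (U : 'M[R]_Ntot) (x : vec) (i : 'I_n) : 'cV[R]_(Ns i) :=
  (blkU U i)^T *m x.

Definition grad (f : vec -> R) (x : vec) : vec :=
  \col_(j < Ntot) ('D_(delta_mx j (0 : 'I_1)) f x).

Definition bgrad (U : 'M[R]_Ntot) (f : vec -> R) (i : 'I_n) (x : vec)
  : 'cV[R]_(Ns i) := (blkU U i)^T *m grad f x.

Definition convex_fun {m} (g : 'cV[R]_m -> R) : Prop :=
  forall (x y : 'cV[R]_m) (l : R), 0 <= l <= 1 ->
    g (l *: x + (1 - l) *: y) <= l * g x + (1 - l) * g y.

Definition proper_fun {m} (g : 'cV[R]_m -> \bar R) : Prop :=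
  (forall t, g t != -oo%E) /\ exists t, (g t < +oo)%E.

Definition convex_efun {m} (g : 'cV[R]_m -> \bar R) : Prop :=
  forall (x y : 'cV[R]_m) (l : R), 0 <= l <= 1 ->
    (g (l *: x + (1 - l) *: y)%R <= l%:E * g x + (1 - l)%:E * g y)%E.

Definition closed_fun {m} (g : 'cV[R]_m -> \bar R) : Prop :=
  lower_semicontinuous g.

Definition Fobj (U : 'M[R]_Ntot) (f : vec -> R)
  (Psi : forall i : 'I_n, 'cV[R]_(Ns i) -> \bar R) (x : vec) : \bar R :=
  ((f x)%:E + \sum_(i < n) Psi i (blk U x i))%E.

Definition Fstar (F : vec -> \bar R) : \bar R := ereal_inf (range F).

Definition Lnorm (U : 'M[R]_Ntot) (B : forall i : 'I_n, 'M[R]_(Ns i))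
  (L : 'I_n -> R) (x : vec) : R :=
  Num.sqrt (\sum_(i < n) L i * bnorm (B i) (blk U x i) ^+ 2).

Definition subgrad (F : vec -> \bar R) (y g : vec) : Prop :=
  forall z, (F y + (inner g (z - y)%R)%:E <= F z)%E.

Definition domF (F : vec -> \bar R) : set vec := [set x | (F x < +oo)%E].

Definition strongly_convex_L (U : 'M[R]_Ntot) (B : forall i : 'I_n, 'M[R]_(Ns i))
  (L : 'I_n -> R) (F : vec -> \bar R) (mu : R) : Prop :=
  forall x y, domF F x -> domF F y -> forall g, subgrad F y g ->
    (F y + (inner g (x - y)%R + mu / 2 * Lnorm U B L (x - y)%R ^+ 2)%R%:E <= F x)%E.

(* objective of the block subproblem defining T^(i)(x) *)
Definition Vobj (U : 'M[R]_Ntot) (f : vec -> R) (B : forall i : 'I_n, 'M[R]_(Ns i))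
  (L : 'I_n -> R) (Psi : forall i : 'I_n, 'cV[R]_(Ns i) -> \bar R)
  (i : 'I_n) (x : vec) (t : 'cV[R]_(Ns i)) : \bar R :=
  ((inner (bgrad U f i x) t + L i / 2 * bnorm (B i) t ^+ 2)%:E
     + Psi i (blk U x i + t)%R)%E.

Definition ucdc_step (U : 'M[R]_Ntot) (T : forall i : 'I_n, vec -> 'cV[R]_(Ns i))
  (x : vec) (i : 'I_n) : vec := x + blkU U i *m T i x.

Definition ucdc (U : 'M[R]_Ntot) (T : forall i : 'I_n, vec -> 'cV[R]_(Ns i))
  (x0 : vec) (w : seq 'I_n) : vec := foldl (ucdc_step U T) x0 w.

(* P(event on x_k), with i_0,...,i_{k-1} i.i.d. uniform on {1..n}:
   each choice sequence in 'I_n^k has probability n^-k *)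
Definition prob_k {k : nat} (P : k.-tuple 'I_n -> bool) : R :=
  (#|[set w : k.-tuple 'I_n | P w]|)%:R / (n ^ k)%:R.

Definition gamma_mu (mu : R) : R := if mu <= 2 then 1 - mu / 4 else mu^-1.

End UCDC.
Arguments Ntot {n} Ns.

(* Main.v *)
From Pilot Require Import Defs.
From HB Require Import structures.
From mathcomp Require Import all_boot all_order all_algebra.
From mathcomp Require Import all_classical all_reals all_analysis.
Import Order.TTheory GRing.Theory Num.Theory.
Import numFieldNormedType.Exports.
Local Open Scope ring_scope.
From mathcomp Require Import fingroup perm ring lra.
Import Order.TTheory GRing.Theory Num.Theory.
Import numFieldNormedType.Exports.


Section Mx.
Context {R : realType} {n : nat} {Ns : 'I_n -> nat}.
Variable U : 'M[R]_(Ntot Ns).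

Lemma Umxrow : \mxrow_j blkU U j = U.
Proof. exact: submxrowK. Qed.

Lemma blkUTU i j : (blkU U i)^T *m blkU U j = submxblock (U^T *m U) i j.
Proof.
by rewrite submxblockEh -mul_submxrow -submxcol_mul /blkU tr_submxrow.
Qed.

Lemma sum_blkU : \sum_i (blkU U i *m (blkU U i)^T) = U *m U^T.
Proof.
by rewrite -mul_mxrow_mxcol -tr_mxrow Umxrow.
Qed.

Lemma perm_UTU : is_perm_mx U -> U^T *m U = 1%:M /\ U *m U^T = 1%:M.
Proof.
case/is_perm_mxP => s ->; rewrite tr_perm_mx -!perm_mxM.
by rewrite mulVg mulgV perm_mx1.
Qed.

Lemma blk_orth i j : U^T *m U = 1%:M -> i != j -> (blkU U i)^T *m blkU U j = 0.
Proof.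
move=> H ij; rewrite blkUTU H -(mxdiagZ (p_:=Ns) 1) /mxdiag mxblockK.
by rewrite (negbTE ij).
Qed.

Lemma blk_id i : U^T *m U = 1%:M -> (blkU U i)^T *m blkU U i = 1%:M.
Proof.
move=> H; rewrite blkUTU H -(mxdiagZ (p_:=Ns) 1) submxblock_diag //.
Qed.

End Mx.


Section An.
Local Open Scope classical_set_scope.
Local Open Scope ring_scope.
Context {R : realType} {n : nat} {Ns : 'I_n -> nat} {f : 'cV[R]_(Ntot Ns) -> R}.
Hypothesis fd : forall x, differentiable f x.

Lemma dgrad y v : 'd f y v = inner (grad f y) v.
Proof.
rewrite /inner /grad mxE.
rewrite {1}(matrix_sum_delta v) linear_sum /=.
apply: eq_bigr => i _; rewrite big_ord1 linearZ /= !mxE deriveE //.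
by rewrite mulrC.
Qed.

Lemma gderiv x v (s : R) : is_derive s (1 : R) (fun s => f (x + s *: v)) ('d f (x + s *: v) v).
Proof.
have E : (fun h : R => h^-1 *: (((fun s => f (x + s *: v)) \o shift s) (h *: 1) - f (x + s *: v)))
   = (fun h : R => h^-1 *: ((f \o shift (x + s *: v)) (h *: v) - f (x + s *: v))).
  apply/funext => h /=.
  have -> : h%:A = h by rewrite /GRing.scale /= mulr1.
  by rewrite scalerDl addrCA.
split; first by rewrite /derivable E; exact: diff_derivable.
by rewrite /derive E -/(derive f (x + s *: v) v) deriveE.
Qed.

Lemma descent_gen (x v : 'cV[R]_(Ntot Ns)) (c K : R) :
  (forall s, 0 < s < 1 -> inner (grad f (x + s *: v)) v - c <= 2 * K * s) ->
  f (x + v) <= f x + c + K.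
Proof.
move=> H.
pose phi := fun s : R => f (x + s *: v) - s * c - K * s ^+ 2.
have dphi s : is_derive s (1 : R) phi ('d f (x + s *: v) v - c - K * (2 * s)).
  have h1 := gderiv x v s.
  have h2 : is_derive s (1 : R) (c \*: (@id R)) (c *: 1).
    exact: is_deriveZ.
  have h3 : is_derive s (1 : R) (K \*: ((@id R) ^+ 2)) (K *: ((2%:R * s ^+ 1) *: 1)).
    exact: is_deriveZ.
  have h := is_deriveB (is_deriveB h1 h2) h3.
  have -> : phi = ((fun s => f (x + s *: v)) - c \*: (@id R)) - K \*: ((@id R) ^+ 2).
    by apply/funext => r; rewrite /phi /= [r * c]mulrC.
  apply: (is_derive_eq h).
  by rewrite /GRing.scale /= !mulr1 expr1.
have dv s : derivable phi s 1 by case: (dphi s).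
have dle : forall s, s \in `]0, 1[ -> derive1 phi s <= 0.
  move=> s; rewrite in_itv /= => /andP[s0 s1].
  rewrite derive1E (@derive_val _ _ _ _ _ _ _ (dphi s)) dgrad.
  have := H s; rewrite s0 s1 => /(_ isT); lra.
have cphi : {within `[0, 1], continuous phi}.
  apply: continuous_subspaceT => s.
  apply: differentiable_continuous; apply/derivable1_diffP; exact: dv.
have := @ler0_derive1_le_cc R phi 0 1 (fun s _ => dv s) dle cphi 1 0.
have i0 : (0:R) \in `[0, 1] by rewrite in_itv /= lexx ler01.
have i1 : (1:R) \in `[0, 1] by rewrite in_itv /= lexx ler01.
move=> /(_ i1 i0 ler01).
rewrite /phi !scale0r !scale1r addr0 !mul0r !mul1r expr0n /= expr1n mulr0 mulr1 !subr0.
lra.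
Qed.

Lemma grad_ineq (cf : convex_fun f) x y : f x + inner (grad f x) (y - x) <= f y.
Proof.
set d := y - x.
have D : derivable f x d by exact: diff_derivable.
have D' := cvg_dnbhs_at_right D.
have le : 'D_d f x <= f y - f x.
  apply: (cvgr_to_le D').
  exists 1 => //= h /= hd hp.
  have h1 : h < 1.
    by move: hd; rewrite /ball /= sub0r normrN gtr0_norm.
  have hc := cf y x h.
  rewrite (ltW hp) (ltW h1) /= in hc; have {}hc := hc isT.
  have -> : h *: d + x = h *: y + (1 - h) *: x.
    by rewrite /d scalerBr scalerBl scale1r addrC addrA [x + _]addrC addrA.
  rewrite [_ *: _]/(GRing.scale _ _) /= -[X in X <= _]/(h^-1 * _).
  rewrite ler_pdivrMl //; lra.
rewrite -dgrad -deriveE //; lra.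
Qed.

End An.


Section Inner.
Context {R : realType} {m : nat}.
Implicit Types a b c : 'cV[R]_m.

Lemma innerDl a b c : inner (a + b) c = inner a c + inner b c.
Proof. by rewrite /inner linearD mulmxDl mxE. Qed.
Lemma innerDr a b c : inner a (b + c) = inner a b + inner a c.
Proof. by rewrite /inner mulmxDr mxE. Qed.
Lemma innerZl k a b : inner (k *: a) b = k * inner a b.
Proof. by rewrite /inner linearZ /= -scalemxAl mxE. Qed.
Lemma innerZr k a b : inner a (k *: b) = k * inner a b.
Proof. by rewrite /inner -scalemxAr mxE. Qed.
Lemma innerNl a b : inner (- a) b = - inner a b.
Proof. by rewrite -scaleN1r innerZl mulN1r. Qed.
Lemma innerNr a b : inner a (- b) = - inner a b.
Proof. by rewrite -scaleN1r innerZr mulN1r. Qed.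
Lemma innerBl a b c : inner (a - b) c = inner a c - inner b c.
Proof. by rewrite innerDl innerNl. Qed.
Lemma innerBr a b c : inner a (b - c) = inner a b - inner a c.
Proof. by rewrite innerDr innerNr. Qed.
Lemma inner0l a : inner 0 a = 0.
Proof. by rewrite /inner linear0 mul0mx mxE. Qed.
Lemma inner0r a : inner a 0 = 0.
Proof. by rewrite /inner mulmx0 mxE. Qed.
Lemma innerC a b : inner a b = inner b a.
Proof. by rewrite /inner !mxE; apply: eq_bigr => i _; rewrite !mxE mulrC. Qed.
Lemma innerM k (A : 'M[R]_(m, k)) (a : 'cV_k) b : inner (A *m a) b = inner a (A^T *m b).
Proof. by rewrite /inner trmx_mul mulmxA. Qed.

Lemma inner_sumr (I : finType) a (b : I -> 'cV[R]_m) :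
  inner a (\sum_i b i) = \sum_i inner a (b i).
Proof. by rewrite /inner mulmx_sumr summxE. Qed.

Lemma posdef_unit {B : 'M[R]_m} : posdef B -> B \in unitmx.
Proof.
case=> Bs Bp; rewrite unitmxE unitfE; apply/negP => /det0P [v v0 vB].
have t0 : v^T != 0 by rewrite trmx_eq0.
have := Bp _ t0.
have -> : B *m v^T = 0 by rewrite -{1}Bs -trmx_mul vB linear0.
by rewrite inner0l ltxx.
Qed.

Lemma posdef_ge0 {B : 'M[R]_m} t : posdef B -> 0 <= inner (B *m t) t.
Proof.
case=> _ Bp; have [->|t0] := eqVneq t 0; first by rewrite inner0r.
exact/ltW/Bp.
Qed.

Lemma cs (B : 'M[R]_m) a t : posdef B -> inner a t <= bdnorm B a * bnorm B t.
Proof.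
move=> pB; have Bu := posdef_unit pB; have [Bs Bp] := pB.
set c := invmx B *m a.
have Bc : B *m c = a by rewrite mulKVmx.
set p := inner a t; set qt := inner (B *m t) t; set qa := inner (invmx B *m a) a.
have qtge : 0 <= qt by exact: posdef_ge0.
have qaE : qa = inner (B *m c) c by rewrite Bc innerC.
have qage : 0 <= qa by rewrite qaE; exact: posdef_ge0.
have key s : 0 <= qt - 2 * s * p + s ^+ 2 * qa.
  have := posdef_ge0 (t - s *: c) pB.
  rewrite mulmxDr mulmxN -scalemxAr Bc !innerDl !innerDr !innerNl !innerNr.
  rewrite !innerZl !innerZr -/qt.
  have -> : inner (B *m t) c = p by rewrite innerM Bs Bc innerC.
  rewrite qaE Bc -/p; lra.
have p2 : p ^+ 2 <= qa * qt.
  have [qa0|qapos] := eqVneq qa 0.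
    have c0 : c = 0.
      apply/eqP; apply/negPn/negP => cn0; have := Bp _ cn0.
      by rewrite Bc -[inner a c]innerC -/qa qa0 ltxx.
    have -> : p = 0 by rewrite /p -Bc c0 mulmx0 inner0l.
    by rewrite qa0 expr0n /= mul0r.
  have qap : 0 < qa by rewrite lt_neqAle eq_sym qapos qage.
  have := key (p / qa).
  have -> : qt - 2 * (p / qa) * p + (p / qa) ^+ 2 * qa = qt - p ^+ 2 / qa.
    by field; rewrite qapos.
  rewrite subr_ge0 ler_pdivrMr // => h; rewrite mulrC //.
rewrite /bdnorm /bnorm -/qa -/qt -sqrtrM //.
apply: le_trans (ler_norm p) _.
rewrite -sqrtr_sqr; exact: ler_wsqrtr.
Qed.

End Inner.


Lemma arith (R : realFieldType) (fx fz V P Pz I N l m : R) :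
  V <= l * I + l ^+ 2 / 2 * N + l * Pz + (1 - l) * P -> l * (fx + I) <= l * fz ->
  fx * m + V + (P * m - P) <= m * (fx + P) - l * ((fx + P) - (fz + Pz)) + l ^+ 2 / 2 * N.
Proof. move=> h1 h2; lra. Qed.

Lemma arith_c1 (R : realFieldType) (S fx fs N mu m : R) :
  S <= m * fx - mu / 2 * (fx - fs) + (mu / 2) ^+ 2 / 2 * N ->
  mu / 4 * (mu / 2 * N) <= mu / 4 * (fx - fs) ->
  S - fs * m <= (m - (1 - (1 - mu / 4))) * (fx - fs).
Proof. move=> h1 h2; lra. Qed.

Lemma arith_c2 (R : realFieldType) (S fx fs N mu m : R) : 0 < mu ->
  S <= m * fx - 1 * (fx - fs) + 1 ^+ 2 / 2 * N ->
  mu^-1 * (mu / 2 * N) <= mu^-1 * (fx - fs) ->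
  S - fs * m <= (m - (1 - mu^-1)) * (fx - fs).
Proof.
move=> mu0 h1 h2.
have e : mu^-1 * (mu / 2 * N) = N / 2 by field; rewrite gt_eqF.
rewrite e in h2; lra.
Qed.

Lemma sum_tuple_cons (V : nmodType) (I : finType) k (G : k.+1.-tuple I -> V) :
  \sum_(w : k.+1.-tuple I) G w = \sum_(i : I) \sum_(w : k.-tuple I) G [tuple of i :: w].
Proof.
rewrite pair_big /=.
rewrite (reindex (fun p : I * k.-tuple I => [tuple of p.1 :: p.2])) //=.
exists (fun w : k.+1.-tuple I => (thead w, [tuple of behead w])).
  by move=> [i w] _ /=; congr pair; apply: val_inj.
by move=> w _; rewrite [RHS]tuple_eta.
Qed.

Lemma markov_cnt (R : realFieldType) (I : finType) (g : I -> R) (eps : R) :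
  (forall w, 0 <= g w) ->
  #|[set w | ~~ (g w <= eps)]|%:R * eps <= \sum_w g w.
Proof.
move=> g0.
have -> : #|[set w | ~~ (g w <= eps)]|%:R * eps = \sum_(w in [set w | ~~ (g w <= eps)]) eps.
  by rewrite sumr_const mulr_natl.
apply: (@le_trans _ _ (\sum_(w in [set w | ~~ (g w <= eps)]) g w)).
  apply: ler_sum => w; rewrite inE -ltNge => /ltW //.
rewrite big_mkcond /=; apply: ler_sum => w _; case: ifP => // _.
Qed.

Lemma numeric (R : realType) (a phi eps rho : R) (k : nat) :
  0 < a <= 1 -> 0 <= phi -> 0 < eps -> 0 < rho ->
  a^-1 * ln (phi / (rho * eps)) <= k%:R ->
  (1 - a) ^+ k * phi <= rho * eps.
Proof.
move=> /andP[a0 a1] phi0 eps0 rho0 hk.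
have [->|phipos] := eqVneq phi 0; first by rewrite mulr0; apply: mulr_ge0; exact: ltW.
have php : 0 < phi by rewrite lt_neqAle eq_sym phipos phi0.
have re : 0 < rho * eps by exact: mulr_gt0.
set r := phi / (rho * eps).
have r0 : 0 < r by exact: divr_gt0.
have h1 : (1 - a) ^+ k <= expR (- a) ^+ k.
  apply: lerXn2r; rewrite ?nnegrE ?subr_ge0 ?expR_ge0 //.
  by have := expR_ge1Dx (- a); rewrite -[1 - a]/(1 + - a).
have h2 : expR (- a) ^+ k <= r^-1.
  have E : r^-1 = expR (- ln r) by rewrite expRN lnK // posrE.
  rewrite E -expRM_natr ler_expR mulNr lerN2.
  by rewrite -(ler_pdivrMl _ _ a0) // -[a^-1 * _]/(a^-1 * ln r).
apply: le_trans (ler_wpM2r phi0 (le_trans h1 h2)) _.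
by rewrite /r invf_div mulrAC mulfK // gt_eqF.
Qed.

Lemma final_arith (R : realFieldType) (Nk M G eps rho X : R) :
  0 < Nk -> 0 < eps -> G = Nk - M -> M * eps <= Nk * X -> X <= rho * eps ->
  1 - rho <= G / Nk.
Proof.
move=> Nk0 e0 -> h1 h2.
have h3 : M * eps <= (Nk * rho) * eps.
  apply: le_trans h1 _; rewrite -mulrA; apply: ler_wpM2l => //; exact: ltW.
rewrite ler_pM2r // in h3.
rewrite ler_pdivlMr //; lra.
Qed.

Lemma gamma_bounds (R : realType) (mu : R) : 0 < mu -> 0 <= gamma_mu mu < 1.
Proof.
move=> mu0; rewrite /gamma_mu; case: ifP => h.
  apply/andP; split; lra.
have h2 : 2 < mu by rewrite ltNge h.
apply/andP; split; first by rewrite invr_ge0 ltW.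
by rewrite invf_lt1 //; lra.
Qed.

Section Main.
Context {R : realType} {n : nat} {Ns : 'I_n -> nat}.
Variable U : 'M[R]_(Ntot Ns).
Variable B : forall i : 'I_n, 'M[R]_(Ns i).
Variable f : 'cV[R]_(Ntot Ns) -> R.
Variable L : 'I_n -> R.
Variable Psi : forall i : 'I_n, 'cV[R]_(Ns i) -> \bar R.
Variable T : forall i : 'I_n, 'cV[R]_(Ntot Ns) -> 'cV[R]_(Ns i).
Hypothesis Uperm : is_perm_mx U.
Hypothesis Bpd : forall i, posdef (B i).
Hypothesis fconv : convex_fun f.
Hypothesis fdiff : forall x, differentiable f x.
Hypothesis Lpos : forall i, 0 < L i.
Hypothesis Lip : forall x i (t : 'cV[R]_(Ns i)),
     bdnorm (B i) (bgrad U f i (x + blkU U i *m t) - bgrad U f i x)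
       <= L i * bnorm (B i) t.
Hypothesis Psiprop : forall i, proper_fun (Psi i) /\ closed_fun (Psi i) /\ convex_efun (Psi i).
Hypothesis Tmin : forall (i : 'I_n) (x : 'cV[R]_(Ntot Ns)) (t : 'cV[R]_(Ns i)),
  (Vobj U f B L Psi i x (T i x) <= Vobj U f B L Psi i x t)%E.

Definition q i (t : 'cV[R]_(Ns i)) := inner (B i *m t) t.

Lemma q_ge0 i t : 0 <= q i t.
Proof. exact: posdef_ge0. Qed.

Lemma bnorm2 i t : bnorm (B i) t ^+ 2 = q i t.
Proof. by rewrite /bnorm sqr_sqrtr //; apply: q_ge0. Qed.

Lemma qZ i k t : q i (k *: t) = k ^+ 2 * q i t.
Proof. by rewrite /q -scalemxAr innerZl innerZr mulrA expr2. Qed.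

Lemma qN i t : q i (- t) = q i t.
Proof. by rewrite -scaleN1r qZ sqrrN expr1n mul1r. Qed.

Lemma bnorm_ge0 i t : 0 <= bnorm (B i) t.
Proof. exact: sqrtr_ge0. Qed.

Lemma bnormZ i k t : 0 <= k -> bnorm (B i) (k *: t) = k * bnorm (B i) t.
Proof.
move=> k0; have := qZ i k t; rewrite /q => E.
by rewrite /bnorm E sqrtrM ?sqr_ge0 // sqrtr_sqr ger0_norm.
Qed.

Lemma descent_blk x i t :
  f (x + blkU U i *m t) <= f x + inner (bgrad U f i x) t + L i / 2 * q i t.
Proof.
apply: (descent_gen fdiff) => s /andP[s0 s1].
rewrite scalemxAr.
have E y : inner (grad f y) (blkU U i *m t) = inner (bgrad U f i y) t.
  by rewrite innerC innerM innerC.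
rewrite E -innerBl.
apply: le_trans (cs _ _ _ (Bpd i)) _.
apply: le_trans (ler_wpM2r (bnorm_ge0 i t) (Lip x i (s *: t))) _.
rewrite bnormZ ?(ltW s0) // -bnorm2 expr2 le_eqVlt; apply/orP; left; apply/eqP.
by field.
Qed.

Lemma UTU : U^T *m U = 1%:M.
Proof. exact: (perm_UTU U Uperm).1. Qed.

Lemma blk_add_same x i t : blk U (x + blkU U i *m t) i = blk U x i + t.
Proof. by rewrite /blk mulmxDr mulmxA blk_id ?UTU // mul1mx. Qed.

Lemma blk_add_other x i j t : j != i -> blk U (x + blkU U i *m t) j = blk U x j.
Proof. by move=> ji; rewrite /blk mulmxDr mulmxA blk_orth ?UTU // mul0mx addr0. Qed.

Lemma blkD x y j : blk U (x + y) j = blk U x j + blk U y j.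
Proof. by rewrite /blk mulmxDr. Qed.

Lemma blkZ k x j : blk U (k *: x) j = k *: blk U x j.
Proof. by rewrite /blk scalemxAr. Qed.

Lemma blkN x j : blk U (- x) j = - blk U x j.
Proof. by rewrite /blk mulmxN. Qed.

Lemma Psi_noo i t : Psi i t != -oo%E.
Proof. by case: (Psiprop i) => -[H _] _; exact: H. Qed.

Local Notation F := (Fobj U f Psi).

Lemma fin_blk x : (F x < +oo)%E -> forall j, Psi j (blk U x j) \is a fin_num.
Proof.
move=> Fx j; rewrite fin_numE Psi_noo /=.
apply/negP => /eqP Pj.
have S : (\sum_(i < n) Psi i (blk U x i) = +oo)%E.
  apply/esum_eqyP; first by move=> i _; apply: Psi_noo.
  by exists j; split => //; rewrite mem_index_enum.
by move: Fx; rewrite /Fobj S addey // ltxx.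
Qed.

Definition Pr x j := fine (Psi j (blk U x j)).
Definition Frl x := f x + \sum_(j < n) Pr x j.

Lemma FE x : (F x < +oo)%E -> F x = (Frl x)%:E.
Proof.
move=> Fx; rewrite /Fobj /Frl EFinD EFin_sum_fine // => j _; exact: fin_blk.
Qed.

Lemma PrE x j : (F x < +oo)%E -> Psi j (blk U x j) = (Pr x j)%:E.
Proof. by move=> Fx; rewrite /Pr fineK //; exact: fin_blk. Qed.

Lemma Vfin x i : (F x < +oo)%E -> Psi i (blk U x i + T i x) \is a fin_num.
Proof.
move=> Fx; have H := Tmin i x 0.
rewrite fin_numE Psi_noo /=; apply/negP => /eqP E.
move: H; rewrite /Vobj E addey // leye_eq addr0 (PrE x i Fx) -EFinD.
by [].
Qed.

Lemma step_blk_fin x i j : (F x < +oo)%E ->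
  Psi j (blk U (ucdc_step U T x i) j) \is a fin_num.
Proof.
move=> Fx; case: (eqVneq j i) => [->|ji]; rewrite /ucdc_step.
  by rewrite blk_add_same; exact: Vfin.
by rewrite blk_add_other //; exact: fin_blk.
Qed.

Lemma step_fin x i : (F x < +oo)%E -> (F (ucdc_step U T x i) < +oo)%E.
Proof.
move=> Fx; rewrite /Fobj -EFin_sum_fine; last by move=> j _; exact: step_blk_fin.
by rewrite -EFinD ltry.
Qed.

Lemma step_bound x i : (F x < +oo)%E ->
  Frl (ucdc_step U T x i) <=
  f x + fine (Vobj U f B L Psi i x (T i x)) + (\sum_(j < n) Pr x j - Pr x i).
Proof.
move=> Fx; rewrite /Frl /Vobj -(fineK (Vfin x i Fx)) -EFinD /=.
rewrite (bigD1 i) //= [X in _ <= _ + (X - _)](bigD1 i) //=.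
have -> : \sum_(j < n | j != i) Pr (ucdc_step U T x i) j = \sum_(j < n | j != i) Pr x j.
  by apply: eq_bigr => j ji; rewrite /Pr /ucdc_step blk_add_other.
rewrite /Pr /ucdc_step blk_add_same bnorm2.
have := descent_blk x i (T i x); lra.
Qed.

Lemma V_conv x z i (l : R) : (F x < +oo)%E -> (F z < +oo)%E -> 0 <= l <= 1 ->
  (Vobj U f B L Psi i x (l *: blk U (z - x) i) <=
   (l * inner (bgrad U f i x) (blk U (z - x) i) + l ^+ 2 * (L i / 2 * q i (blk U (z - x) i))
    + l * Pr z i + (1 - l) * Pr x i)%:E)%E.
Proof.
move=> Fx Fz hl.
have E : blk U x i + l *: blk U (z - x) i = l *: blk U z i + (1 - l) *: blk U x i.
  by rewrite blkD blkN scalerDr scalerN scalerBl scale1r addrCA.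
have Hc := (Psiprop i).2.2 (blk U z i) (blk U x i) l hl.
rewrite /Vobj E.
apply: le_trans (leeD (lexx _) Hc) _.
rewrite (PrE z i Fz) (PrE x i Fx) -!EFinM -!EFinD lee_fin.
rewrite bnorm2 qZ innerZr.
lra.
Qed.

Lemma sum_inner_blk g d :
  \sum_(i < n) inner ((blkU U i)^T *m g) ((blkU U i)^T *m d) = inner g d.
Proof.
under eq_bigr do rewrite innerM trmxK mulmxA.
rewrite -inner_sumr -mulmx_suml sum_blkU (perm_UTU U Uperm).2 mul1mx //.
Qed.

Definition N2 x z := \sum_(i < n) L i * q i (blk U (z - x) i).

Lemma sum_V x z (l : R) : (F x < +oo)%E -> (F z < +oo)%E -> 0 <= l <= 1 ->
  \sum_(i < n) fine (Vobj U f B L Psi i x (T i x)) <=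
  l * inner (grad f x) (z - x) + l ^+ 2 / 2 * N2 x z
  + l * \sum_(i < n) Pr z i + (1 - l) * \sum_(i < n) Pr x i.
Proof.
move=> Fx Fz hl.
have H i : fine (Vobj U f B L Psi i x (T i x)) <=
   l * inner (bgrad U f i x) (blk U (z - x) i) + l ^+ 2 * (L i / 2 * q i (blk U (z - x) i))
    + l * Pr z i + (1 - l) * Pr x i.
  rewrite -lee_fin (fineK); last first.
    rewrite /Vobj fin_numD; apply/andP; split => //; exact: Vfin.
  exact: le_trans (Tmin i x _) (V_conv x z i l Fx Fz hl).
apply: le_trans (ler_sum _ (fun i _ => H i)) _.
rewrite !big_split /= -!mulr_sumr.
rewrite -(sum_inner_blk (grad f x) (z - x)) /N2 mulr_sumr.
have -> : (\sum_(i < n) L i / 2 * q i (blk U (z - x) i)) =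
   2^-1 * \sum_(i < n) L i * q i (blk U (z - x) i).
  by rewrite mulr_sumr; apply: eq_bigr => i _; rewrite [2^-1 * _]mulrC mulrAC.
by rewrite mulrA.
Qed.

Lemma sum_step x z (l : R) : (F x < +oo)%E -> (F z < +oo)%E -> 0 <= l <= 1 ->
  \sum_(i < n) Frl (ucdc_step U T x i) <=
  n%:R * Frl x - l * (Frl x - Frl z) + l ^+ 2 / 2 * N2 x z.
Proof.
move=> Fx Fz hl.
apply: le_trans (ler_sum _ (fun i _ => step_bound x i Fx)) _.
have S1 := sum_V x z l Fx Fz hl.
have G := grad_ineq fdiff fconv x z.
have G' := ler_wpM2l (proj1 (andP hl)) G.
have E : \sum_(i < n) (f x + fine (Vobj U f B L Psi i x (T i x)) + (\sum_(j < n) Pr x j - Pr x i))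
  = f x * n%:R + \sum_(i < n) fine (Vobj U f B L Psi i x (T i x))
    + ((\sum_(j < n) Pr x j) * n%:R - \sum_(j < n) Pr x j).
  by rewrite !big_split /= sumrN !sumr_const card_ord !mulr_natr.
rewrite E /Frl; exact: arith S1 G'.
Qed.

Lemma N2_ge0 x z : 0 <= N2 x z.
Proof. by apply: sumr_ge0 => i _; apply: mulr_ge0; [exact: ltW | exact: q_ge0]. Qed.

Lemma sc_bound (mu : R) xs x : strongly_convex_L U B L F mu ->
  (forall y, (F xs <= F y)%E) -> (F x < +oo)%E ->
  Frl xs + mu / 2 * N2 x xs <= Frl x.
Proof.
move=> sc min Fx.
have Fxs : (F xs < +oo)%E := le_lt_trans (min x) Fx.
have sg : subgrad F xs 0 by move=> z; rewrite inner0l adde0.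
have := sc x xs Fx Fxs 0 sg.
rewrite inner0l add0r (FE x Fx) (FE xs Fxs) -EFinD lee_fin.
have -> : Pilot.Defs.Lnorm U B L (x - xs) ^+ 2 = N2 x xs; last by [].
rewrite /Pilot.Defs.Lnorm sqr_sqrtr; last first.
  by apply: sumr_ge0 => i _; apply: mulr_ge0; [exact: ltW | exact: sqr_ge0].
apply: eq_bigr => i _; rewrite bnorm2 -opprB blkN qN //.
Qed.

Lemma contract (mu : R) xs x : strongly_convex_L U B L F mu ->
  (forall y, (F xs <= F y)%E) -> 0 < mu -> (F x < +oo)%E ->
  \sum_(i < n) (Frl (ucdc_step U T x i) - Frl xs) <=
  (n%:R - (1 - gamma_mu mu)) * (Frl x - Frl xs).
Proof.
move=> sc min mu0 Fx.
have Fxs : (F xs < +oo)%E := le_lt_trans (min x) Fx.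
have H2 := sc_bound mu xs x sc min Fx.
rewrite sumrB sumr_const card_ord -[Frl xs *+ n]mulr_natr.
rewrite /gamma_mu; case: ifP => hmu.
- have hl : 0 <= mu / 2 <= 1.
    apply/andP; split; first by apply: divr_ge0; exact: ltW.
    by rewrite ler_pdivrMr //; lra.
  have H1 := sum_step x xs (mu / 2) Fx Fxs hl.
  apply: arith_c1 H1 _.
  by apply: ler_wpM2l; [apply: divr_ge0; exact: ltW | lra].
- have := sum_step x xs 1 Fx Fxs; rewrite ler01 lexx => /(_ isT) H1.
  apply: arith_c2 H1 _ => //.
  by apply: ler_wpM2l; [rewrite invr_ge0; exact: ltW | lra].
Qed.

Lemma ucdc_fin x w : (F x < +oo)%E -> (F (ucdc U T x w) < +oo)%E.
Proof. by elim: w x => //= i w IH x Fx; apply: IH; exact: step_fin. Qed.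

Lemma phi_ge0 xs x : (forall y, (F xs <= F y)%E) -> (F x < +oo)%E -> 0 <= Frl x - Frl xs.
Proof.
move=> min Fx; have Fxs : (F xs < +oo)%E := le_lt_trans (min x) Fx.
by have := min x; rewrite (FE x Fx) (FE xs Fxs) lee_fin subr_ge0.
Qed.

Lemma tuple_rec (mu : R) xs k x : strongly_convex_L U B L F mu ->
  (forall y, (F xs <= F y)%E) -> 0 < mu -> (0 < n)%N -> (F x < +oo)%E ->
  \sum_(w : k.-tuple 'I_n) (Frl (ucdc U T x w) - Frl xs) <=
  (n%:R - (1 - gamma_mu mu)) ^+ k * (Frl x - Frl xs).
Proof.
move=> sc min mu0 n0.
have c0 : 0 <= n%:R - (1 - gamma_mu mu).
  have g0 : 0 <= gamma_mu mu.
    rewrite /gamma_mu; case: ifP => h; last by rewrite invr_ge0 ltW.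
    lra.
  have : (1 : R) <= n%:R by rewrite ler1n.
  lra.
elim: k x => [|k IH] x Fx.
  rewrite (eq_bigr (fun _ => Frl x - Frl xs)); last by move=> w _; rewrite tuple0.
  by rewrite sumr_const card_tuple expn0 expr0 mul1r.
rewrite sum_tuple_cons.
apply: (@le_trans _ _ (\sum_(i < n) ((n%:R - (1 - gamma_mu mu)) ^+ k *
                         (Frl (ucdc_step U T x i) - Frl xs)))).
  by apply: ler_sum => i _; apply: IH; exact: step_fin.
rewrite -mulr_sumr exprSr -mulrA.
apply: ler_wpM2l; first exact: exprn_ge0.
exact: contract.
Qed.

Lemma main (mu eps rho : R) (x0 : 'cV[R]_(Ntot Ns)) (k : nat) :
  (0 < n)%N ->
  (exists xs, forall x, (F xs <= F x)%E) ->
  0 < mu ->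
  strongly_convex_L U B L F mu ->
  0 < eps -> 0 < rho < 1 ->
  (F x0 < +oo)%E ->
  n%:R / (1 - gamma_mu mu)
    * ln (fine (F x0 - Fstar F) / (rho * eps)) <= k%:R ->
  1 - rho <= prob_k (fun w : k.-tuple 'I_n =>
     (F (ucdc U T x0 w) - Fstar F <= eps%:E)%E).
Proof.
move=> n0 [xs min] mu0 sc eps0 /andP[rho0 rho1] Fx0 hk.
have Fxs : (F xs < +oo)%E := le_lt_trans (min x0) Fx0.
have FsE : Fstar F = (Frl xs)%:E.
  rewrite -(FE xs Fxs); apply/eqP; rewrite eq_le; apply/andP; split.
    by apply: ereal_inf_lbound; exists xs.
  by apply: le_ereal_inf_tmp => _ [y _ <-]; exact: min.
set g := fun w : k.-tuple 'I_n => Frl (ucdc U T x0 w) - Frl xs.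
have gE (w : k.-tuple 'I_n) : (F (ucdc U T x0 w) - Fstar F <= eps%:E)%E = (g w <= eps).
  by rewrite (FE _ (ucdc_fin x0 w Fx0)) FsE -EFinB lee_fin.
rewrite /prob_k.
have -> : [set w : k.-tuple 'I_n | (F (ucdc U T x0 w) - Fstar F <= eps%:E)%E]
        = [set w | (g w <= eps)%R] by apply/setP => w; rewrite !inE gE.
have C : (#|[set w | (g w <= eps)%R]| + #|[set w | ~~ (g w <= eps)%R]| = n ^ k)%N.
  have -> : [set w | ~~ (g w <= eps)%R] = ~: [set w | (g w <= eps)%R].
    by apply/setP => w; rewrite !inE.
  by rewrite cardsC card_tuple card_ord.
have [g0 g1] := andP (@gamma_bounds _ mu mu0).
set a := (1 - gamma_mu mu) / n%:R.
have npos : (0 : R) < n%:R by rewrite ltr0n.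
have ha : 0 < a <= 1.
  apply/andP; split; first by apply: divr_gt0 => //; lra.
  rewrite ler_pdivrMr // mul1r; have : (1 : R) <= n%:R by rewrite ler1n.
  lra.
have phi0 := phi_ge0 xs x0 min Fx0.
have hnum : (1 - a) ^+ k * (Frl x0 - Frl xs) <= rho * eps.
  apply: numeric => //.
  move: hk; rewrite (FE x0 Fx0) FsE -EFinB /= /a invf_div //.
have Mk := @markov_cnt _ _ g eps (fun w => phi_ge0 xs _ min (ucdc_fin x0 w Fx0)).
have TR := tuple_rec mu xs k x0 sc min mu0 n0 Fx0.
have cE : n%:R - (1 - gamma_mu mu) = n%:R * (1 - a).
  by rewrite /a mulrBr mulr1 mulrCA divff ?mulr1 // gt_eqF.
rewrite cE exprMn in TR.
apply: (@final_arith _ _ (#|[set w | ~~ (g w <= eps)%R]|%:R) _ eps rho ((1 - a) ^+ k * (Frl x0 - Frl xs))).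
- by rewrite ltr0n expn_gt0 n0.
- exact: eps0.
- by rewrite -C natrD addrK.
- apply: le_trans Mk _; rewrite natrX mulrA; exact: TR.
- exact: hnum.
Qed.

End Main.

Theorem theorem7 (R : realType) (n : nat) (Ns : 'I_n -> nat)
  (U : 'M[R]_(Ntot Ns)) (B : forall i : 'I_n, 'M[R]_(Ns i))
  (f : 'cV[R]_(Ntot Ns) -> R) (L : 'I_n -> R)
  (Psi : forall i : 'I_n, 'cV[R]_(Ns i) -> \bar R)
  (T : forall i : 'I_n, 'cV[R]_(Ntot Ns) -> 'cV[R]_(Ns i))
  (mu eps rho : R) (x0 : 'cV[R]_(Ntot Ns)) (k : nat) :
  (0 < n)%N ->
  is_perm_mx U ->
  (forall i, posdef (B i)) ->
  convex_fun f ->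
  (forall x, differentiable f x) ->
  (forall i, 0 < L i) ->
  (forall x i (t : 'cV[R]_(Ns i)),
     bdnorm (B i) (bgrad U f i (x + blkU U i *m t) - bgrad U f i x)
       <= L i * bnorm (B i) t) ->
  (forall i, proper_fun (Psi i) /\ closed_fun (Psi i) /\ convex_efun (Psi i)) ->
  (exists xs, forall x, (Fobj U f Psi xs <= Fobj U f Psi x)%E) ->
  (forall (i : 'I_n) (x : 'cV[R]_(Ntot Ns)) (t : 'cV[R]_(Ns i)), (Vobj U f B L Psi i x (T i x) <= Vobj U f B L Psi i x t)%E) ->
  0 < mu ->
  strongly_convex_L U B L (Fobj U f Psi) mu ->
  0 < eps -> 0 < rho < 1 ->
  (Fobj U f Psi x0 < +oo)%E ->
  n%:R / (1 - gamma_mu mu)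
    * ln (fine (Fobj U f Psi x0 - Fstar (Fobj U f Psi)) / (rho * eps)) <= k%:R ->
  1 - rho <= prob_k (fun w : k.-tuple 'I_n =>
     (Fobj U f Psi (ucdc U T x0 w) - Fstar (Fobj U f Psi) <= eps%:E)%E).
Proof.
move=> n0 Up Bp fc fd Lp Lip Pp ex Tm mu0 sc e0 r Fx hk.
exact: (main U B f L Psi T Up Bp fc fd Lp Lip Pp Tm mu eps rho x0 k n0 ex mu0 sc e0 r Fx hk).
Qed.
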